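(* Let $R$ be a finite ranked poset with a unique maximum element $\hat 1^R$. Let $\hat R=R\cup\{\hat 1\}$, where $\hat 1$ is a new element greater than every element of $R$ and of rank $|\hat 1^R|+1$, and let $\dot R=\hat R\setminus\{\hat 1^R\}$ with the induced order and ranks. Then $$\mathcal{M}_{\dot R}(z)=\mathcal{M}_{\hat R}(z)-(1-z)\,g^R_{|R|}(z),$$ where $|R|=|\hat 1^R|$ is the rank of $R$.
   Context: A ranked poset is a poset with a rank function $|\cdot|$ such that covering relations increase rank by exactly one and minimal elements have rank $-1$ (in $\hat R,\dot R$ the new element $\hat 1$ is assigned rank $|\hat 1^R|+1$ as stated). The Möbius function $\mu$ is $\mu[p,p]=1$, $\mu[p,q]=-\sum_{p\le s<q}\mu[p,s]$ for $p<q$, $0$ if $p\not\le q$; $\mu_z[p,q]=\mu[p,q]z^{|q|-|p|}$; $\mathcal{M}_P(z)=\sum_{p\le q\in P}\mu_z[p,q]$. The top polynomial of $R$ is $g^R_{|R|}(z)=\sum_{p\le q,\ |p|\le |R|\le|q|}\mu_z[p,q]=\sum_{p\in R}\mu_z[p,\hat 1^R]$. *)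

(* Defs.v *)
From HB Require Import structures.
From mathcomp Require Import all_boot all_order all_algebra.
Set Implicit Arguments. Unset Strict Implicit. Unset Printing Implicit Defensive.
Import Order.TTheory GRing.Theory Num.Theory.
Local Open Scope ring_scope.

Definition ranked_poset (T : finType) (le : rel T) (rank : T -> int) : Prop :=
  [/\ reflexive le, antisymmetric le, transitive le,
      (forall x y, le x y -> x != y ->
         (forall z, le x z -> le z y -> z = x \/ z = y) ->
         rank y = rank x + 1)
    & (forall x, (forall y, le y x -> y = x) -> rank x = -1)].

(* The recursion is run with fuel n; with fuel #|T| (longer
   than any chain) it computes the Möbius function. *)
Fixpoint mob_fuel (T : finType) (le : rel T) (S : {set T}) (n : nat) (p q : T)
  : int :=
  match n with
  | 0%N => if p == q then 1 else 0
  | n'.+1 =>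
      if p == q then 1
      else if le p q then
        - \sum_(s in S | le p s && (s != q) && le s q) mob_fuel le S n' p s
      else 0
  end.

Definition mobius (T : finType) (le : rel T) (S : {set T}) (p q : T) : int :=
  mob_fuel le S #|T| p q.

Definition mobz (T : finType) (le : rel T) (rank : T -> int) (S : {set T})
  (p q : T) : {poly int} :=
  (mobius le S p q)%:P * 'X^(absz (rank q - rank p)).

Definition MobPoly (T : finType) (le : rel T) (rank : T -> int) (S : {set T})
  : {poly int} :=
  \sum_(p in S) \sum_(q in S | le p q) mobz le rank S p q.

(* hat R = R ∪ {hat 1} realised as option T, None = hat 1 *)
Definition hat_le (T : finType) (le : rel T) : rel (option T) :=
  fun a b => match a, b with
             | _, None => true
             | None, Some _ => false
             | Some x, Some y => le x y
             end.

Definition hat_rank (T : finType) (rank : T -> int) (top : T) : option T -> int :=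
  fun a => match a with None => rank top + 1 | Some x => rank x end.

Definition top_poly (T : finType) (le : rel T) (rank : T -> int) (top : T)
  : {poly int} :=
  \sum_(p : T) \sum_(q : T | le p q && (rank p <= rank top <= rank q))
     mobz le rank [set: T] p q.

(* Main.v *)
Require Import Defs.
From HB Require Import structures.
From mathcomp Require Import all_boot all_order all_algebra.
From mathcomp Require Import zify ring.
Set Implicit Arguments. Unset Strict Implicit. Unset Printing Implicit Defensive.
Import Order.TTheory GRing.Theory Num.Theory.
Local Open Scope ring_scope.

Lemma sum_option (T : finType) (V : nmodType) (P : pred (option T)) (F : option T -> V) :
  \sum_(s | P s) F s = (if P None then F None else 0) + \sum_(x | P (Some x)) F (Some x).
Proof.
rewrite big_mkcond (bigD1 None) //=; congr (_ + _).
rewrite (reindex_omap Some id) => [|[x|] //].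
rewrite [RHS]big_mkcond; apply: eq_bigl => x /=; by rewrite eqxx.
Qed.

Lemma sum_optionT (T : finType) (V : nmodType) (P : pred (option T)) (F : option T -> V) :
  P None -> \sum_(s | P s) F s = F None + \sum_(x | P (Some x)) F (Some x).
Proof. by move=> H; rewrite sum_option H. Qed.

Definition ivl (T : finType) (le : rel T) (p q : T) := [set s | le p s && le s q && (s != q)].

Section Stab.
Variables (T : finType) (le : rel T) (S : {set T}).
Hypotheses (lerf : reflexive le) (lean : antisymmetric le) (letr : transitive le).

Lemma ivl_lt p q s : le p s -> le s q -> s != q -> (#|ivl le p s| < #|ivl le p q|)%N.
Proof.
move=> ps sq nsq; apply: proper_card; apply/properP; split.
  apply/subsetP => z; rewrite !inE => /andP[/andP[pz zs] zns].
  rewrite pz (letr zs sq) /=; apply/eqP => zq; subst z.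
  by move/eqP: nsq; apply; apply: lean; rewrite zs sq.
by exists s; rewrite !inE ?ps ?sq ?nsq ?eqxx ?andbF.
Qed.

Lemma mob_stable n m p q : (#|ivl le p q| <= n)%N -> (#|ivl le p q| <= m)%N ->
  mob_fuel le S n p q = mob_fuel le S m p q.
Proof.
elim: n m p q => [|n IH] [|m] p q //=.
- rewrite leqn0 => /eqP/cards0_eq H _; case: eqP => // /eqP pq.
  case pqle: (le p q) => //.
  have : p \in ivl le p q by rewrite inE pqle pq lerf.
  by rewrite H inE.
- move=> _; rewrite leqn0 => /eqP/cards0_eq H; case: eqP => // /eqP pq.
  case pqle: (le p q) => //.
  have : p \in ivl le p q by rewrite inE pqle pq lerf.
  by rewrite H inE.
- move=> Hn Hm; case: eqP => // _; case: (le p q) => //; congr (- _).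
  apply: eq_bigr => s /andP[_ /andP[/andP[ps sq] ssq]].
  have := ivl_lt ps ssq sq => lt.
  by apply: IH; rewrite -ltnS; apply: leq_trans lt _.
Qed.

Lemma mobius_unfold p q : p != q -> le p q ->
  mobius le S p q = - \sum_(s in S | le p s && (s != q) && le s q) mobius le S p s.
Proof.
move=> pq lpq; rewrite /mobius (@mob_stable _ (#|T|.+1)) ?max_card ?(leqW (max_card _)) //=.
by rewrite (negbTE pq) lpq.
Qed.

End Stab.

Lemma mobius_refl (T : finType) (le : rel T) S p : mobius le S p p = 1.
Proof. by rewrite /mobius; case: (#|T|) => [|n] /=; rewrite eqxx. Qed.

Section Main.
Variables (T : finType) (le : rel T) (rank : T -> int) (top : T).
Hypothesis (Hr : ranked_poset le rank) (Htop : forall x, le x top).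

Let lerf : reflexive le. Proof. by case: Hr. Qed.
Let lean : antisymmetric le. Proof. by case: Hr. Qed.
Let letr : transitive le. Proof. by case: Hr. Qed.

Let hle := hat_le le.
Let hlerf : reflexive hle. Proof. by case=> //= x; apply: lerf. Qed.
Let hlean : antisymmetric hle.
Proof. by move=> [x|] [y|] //= /andP[a b]; congr Some; apply: lean; rewrite a b. Qed.
Let hletr : transitive hle.
Proof. by move=> [y|] [x|] [z|] //=; apply: letr. Qed.

Lemma rank_lt x y : le x y -> x != y -> rank x < rank y.
Proof.
suff H : forall n x y, (#|[set s | le x s && le s y]| <= n)%N -> le x y -> x != y -> rank x < rank y.
  by apply: H (leqnn _).
elim=> [|n IH] {}x {}y.
  rewrite leqn0 => /eqP/cards0_eq E lxy _.
  have : x \in [set s | le x s && le s y] by rewrite inE lerf lxy.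
  by rewrite E inE.
move=> Hc lxy nxy.
case: (boolP [exists z, [&& le x z, le z y, z != x & z != y]]).
  move=> /existsP[z /and4P[xz zy zx zy']].
  have sub1 : forall a b, le x a -> le b y -> [set s | le a s && le s b] \subset [set s | le x s && le s y].
    move=> a b xa by_; apply/subsetP => s; rewrite !inE => /andP[as_ sb].
    by rewrite (letr xa as_) (letr sb by_).
  have c1 : (#|[set s | le x s && le s z]| <= n)%N.
    rewrite -ltnS; apply: leq_trans Hc; apply: proper_card; apply/properP; split.
      by apply: sub1 => //; apply: lerf.
    exists y; first by rewrite inE lerf lxy.
    rewrite inE lxy /=; apply/negP => yz; move/negP: zy'; apply.
    by apply/eqP; apply: lean; rewrite zy yz.
  have c2 : (#|[set s | le z s && le s y]| <= n)%N.
    rewrite -ltnS; apply: leq_trans Hc; apply: proper_card; apply/properP; split.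
      by apply: sub1 => //; apply: lerf.
    exists x; first by rewrite inE lerf lxy.
    rewrite inE lxy andbT; apply/negP => zx'; move/negP: zx; apply.
    by apply/eqP; apply: lean; rewrite zx' xz.
  apply: lt_trans (IH _ _ c1 xz _) (IH _ _ c2 zy _); first by rewrite eq_sym.
  by [].
move=> /existsPn Hn.
case: Hr => _ _ _ Hcov _.
rewrite (Hcov x y lxy nxy); first by lia.
move=> z xz zy; have := Hn z; rewrite xz zy /= negb_and !negbK.
by case/orP => /eqP ->; [left|right].
Qed.

Lemma rank_le x y : le x y -> rank x <= rank y.
Proof. by case: (eqVneq x y) => [->//|] nxy lxy; apply: ltW; apply: rank_lt. Qed.


Lemma someE (a b : T) : (Some a == Some b) = (a == b).
Proof. by apply/eqP/eqP => [[]|->]. Qed.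

Let dot := [set x : option T | x != Some top].
Let mR x y := mobius le [set: T] x y.

Lemma mob_hat_some n x y :
  mob_fuel hle [set: option T] n (Some x) (Some y) = mob_fuel le [set: T] n x y.
Proof.
elim: n y => [|n IH] y /=; rewrite someE //.
case: (x == y) => //; case: (le x y) => //; congr (- _).
rewrite sum_option /= andbF add0r.
by apply: eq_big => [z|z _]; rewrite ?in_setT ?someE ?andbT.
Qed.

Lemma mob_dot_hat n p q : ~~ hle (Some top) q ->
  mob_fuel hle dot n p q = mob_fuel hle [set: option T] n p q.
Proof.
elim: n q => [|n IH] q //= Hq.
case: (p == q) => //; case: (hle p q) => //; congr (- _).
have Hs : forall s, hle s q -> ~~ hle (Some top) s.
  move=> s sq; apply/negP => ts; move/negP: Hq; apply; exact: hletr ts sq.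
transitivity (\sum_(s | hle p s && (s != q) && hle s q) mob_fuel hle dot n p s).
  apply: eq_bigl => s; case C: (hle p s && (s != q) && hle s q); rewrite ?andbF ?andbT //.
  rewrite inE; apply/negP => /eqP st; subst s.
  by move/andP: C => [_ C]; move/negP: (Hs _ C).
apply: eq_big => [s|s /andP[_ C]]; first by rewrite in_setT.
by apply: IH; apply: Hs.
Qed.


Lemma hat_some x y : mobius hle [set: option T] (Some x) (Some y) = mR x y.
Proof.
rewrite /mobius mob_hat_some card_option /mR /mobius.
apply: (mob_stable _ lerf lean letr); [exact: (leqW (max_card _)) | exact: max_card].
Qed.

Lemma mR_top x : x != top ->
  mR x top = - \sum_(y | le x y && (y != top)) mR x y.
Proof.
move=> xt; rewrite /mR (mobius_unfold _ lerf lean letr) //.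
congr (- _); apply: eq_bigl => y; by rewrite in_setT Htop andbT.
Qed.

Lemma hat_none x :
  mobius hle [set: option T] (Some x) None = if x == top then -1 else 0.
Proof.
rewrite (mobius_unfold _ hlerf hlean hletr) //.
rewrite sum_option /= andbF add0r.
rewrite (eq_big (fun y => le x y) (fun y => mR x y)); last first.
- by move=> y _; apply: hat_some.
- by move=> y; rewrite in_setT !andbT.
case: (eqVneq x top) => [->|xt].
  rewrite (big_pred1 top); first by rewrite /mR mobius_refl.
  move=> y /=; apply/idP/eqP => [ty|->]; last exact: lerf.
  by apply: lean; rewrite ty Htop.
rewrite (bigD1 top) ?Htop //= mR_top //; apply/eqP; rewrite oppr_eq0 addrC subrr //.
Qed.


Lemma dot_some x y : y != top -> mobius hle dot (Some x) (Some y) = mR x y.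
Proof.
move=> yt; rewrite /mobius mob_dot_hat; first exact: (hat_some x y).
rewrite /hle /=; apply/negP => ty; move/negP: yt; apply; apply/eqP; apply: lean.
by rewrite ty Htop.
Qed.

Lemma dot_none x : x != top -> mobius hle dot (Some x) None = mR x top.
Proof.
move=> xt; rewrite (mobius_unfold _ hlerf hlean hletr) // sum_option /= andbF add0r mR_top //.
congr (- _); apply: eq_big => [y|y].
  by rewrite inE someE !andbT andbC.
by rewrite inE someE => /andP[yt _]; apply: dot_some.
Qed.

Definition t x y := mobz le rank [set: T] x y.
Arguments t : simpl never.
Let hr := hat_rank rank top.

Lemma g_eq : top_poly le rank top = \sum_x t x top.
Proof.
rewrite /top_poly; apply: eq_bigr => x _; apply: big_pred1 => y /=.
case: (eqVneq y top) => [->|yt]; first by rewrite Htop rank_le ?lexx.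
case lxy: (le x y) => //=.
have := rank_lt (Htop y) yt; rewrite ltNge => /negbTE ->; by rewrite andbF.
Qed.

Lemma ifTE (A : Type) (a b : A) : (if true then a else b) = a. Proof. by []. Qed.
Lemma noneS : (None != Some top) && true = true. Proof. by []. Qed.
Lemma hle_xN q : hle q None = true. Proof. by case: q. Qed.
Lemma hle_NS y : hle None (Some y) = false. Proof. by []. Qed.
Lemma hle_SS x y : hle (Some x) (Some y) = le x y. Proof. by []. Qed.
Lemma in_dot s : (s \in dot) = (s != Some top). Proof. by rewrite inE. Qed.
Lemma le_topE y : le top y = (y == top).
Proof. by apply/idP/eqP => [ty|->]; [apply: lean; rewrite ty Htop | apply: lerf]. Qed.

Lemma mobz_NN S : mobz hle hr S None None = 1.
Proof. by rewrite /mobz mobius_refl subrr expr0 mulr1. Qed.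
Lemma mobz_hat_SS x y : mobz hle hr [set: option T] (Some x) (Some y) = t x y.
Proof. by rewrite /mobz hat_some. Qed.
Lemma mobz_dot_SS x y : y != top -> mobz hle hr dot (Some x) (Some y) = t x y.
Proof. by move=> yt; rewrite /mobz dot_some. Qed.
Lemma mobz_hat_SN x :
  mobz hle hr [set: option T] (Some x) None = if x == top then - 'X else 0.
Proof.
rewrite /mobz hat_none; case: eqP => [->|_]; last by rewrite mul0r.
rewrite /hr /=; have -> : (rank top + 1 - rank top = 1) by lia.
by rewrite expr1 polyCN mulNr mul1r.
Qed.
Lemma mobz_dot_SN x : x != top -> mobz hle hr dot (Some x) None = 'X * t x top.
Proof.
move=> xt; rewrite /mobz dot_none // /t /mobz /hr /=.
have := rank_le (Htop x) => H.
have -> : absz (rank top + 1 - rank x)%R = (absz (rank top - rank x)%R).+1 by lia.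
by rewrite exprS mulrCA.
Qed.

Lemma hat_eq : MobPoly hle hr [set: option T] =
  1 - 'X + \sum_(x | x != top) \sum_(y | le x y && (y != top)) t x y + \sum_x t x top.
Proof.
rewrite /MobPoly sum_optionT ?in_setT // sum_optionT; last by rewrite in_setT hle_xN.
rewrite mobz_NN.
rewrite big_pred0 => [|y]; last by rewrite in_setT hle_NS andbF.
rewrite addr0.
rewrite (eq_big (fun x => true) (fun x => (if x == top then - 'X else 0) +
   (t x top + \sum_(y | le x y && (y != top)) t x y))); first last.
- move=> x _; rewrite sum_optionT; last by rewrite in_setT hle_xN.
  rewrite mobz_hat_SN; congr (_ + _).
  rewrite (eq_big (fun y => le x y) (fun y => t x y)); first last.
  + by move=> y _; apply: mobz_hat_SS.
  + by move=> y; rewrite in_setT hle_SS.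
  by rewrite (bigD1 top) ?Htop.
- by move=> x; rewrite in_setT.
rewrite big_split big_split /=.
rewrite (bigD1 top) //= eqxx big1 ?addr0; last by move=> x /negbTE ->.
rewrite [\sum_i \sum_(y | _) _](bigD1 top) //=.
rewrite [\sum_(y | le top y && _) _]big_pred0 => [|y]; last by rewrite le_topE andbN.
rewrite add0r.
ring.
Qed.

Lemma dot_eq : MobPoly hle hr dot =
  1 + 'X * \sum_(x | x != top) t x top + \sum_(x | x != top) \sum_(y | le x y && (y != top)) t x y.
Proof.
rewrite /MobPoly sum_optionT ?in_dot // sum_optionT; last by rewrite in_dot hle_xN.
rewrite mobz_NN.
rewrite big_pred0 => [|y]; last by rewrite hle_NS andbF.
rewrite addr0 -addrA; congr (_ + _).
rewrite (eq_big (fun x => x != top) (fun x => 'X * t x top + \sum_(y | le x y && (y != top)) t x y)).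
- by rewrite big_split mulr_sumr.
- by move=> x; rewrite in_dot someE.
move=> x; rewrite in_dot someE => xt.
rewrite sum_optionT; last by rewrite in_dot hle_xN.
rewrite mobz_dot_SN //; congr (_ + _).
apply: eq_big => [y|y]; first by rewrite in_dot someE hle_SS andbC.
by rewrite in_dot someE => /andP[yt _]; apply: mobz_dot_SS.
Qed.

Lemma t_top : t top top = 1.
Proof. by rewrite /t /mobz mobius_refl subrr expr0 mulr1. Qed.

Theorem main_sec : MobPoly hle hr dot =
  MobPoly hle hr [set: option T] - (1 - 'X) * top_poly le rank top.
Proof.
rewrite dot_eq hat_eq g_eq [\sum_x t x top](bigD1 top) //= t_top.
ring.
Qed.

End Main.

Theorem mainTheorem10 (T : finType) (le : rel T) (rank : T -> int) (top : T) :
  ranked_poset le rank ->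
  (forall x, le x top) ->
  MobPoly (hat_le le) (hat_rank rank top) [set x | x != Some top]
  = MobPoly (hat_le le) (hat_rank rank top) [set: option T]
    - (1 - 'X) * top_poly le rank top.
Proof. move=> Hr Htop; exact: (main_sec Hr Htop). Qed.
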